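(* Let $d\in(0,1]$ and $0<\rho\le d^5/(3^{40}2^5)$, and let $n$ be sufficiently large (e.g. $n\ge 30$). Let $H$ be an $n$-vertex $(\rho,d)$-cherry-dense $3$-graph. Then there is a spanning subgraph $H'$ of $H$ such that: (1) for every pair $S$ of distinct vertices, either $\deg_{H'}(S)\ge dn/3$ or $\deg_{H'}(S)=0$; moreover the number of pairs $S$ with $\deg_{H'}(S)=0$ is at most $\rho^{1/5}\binom n2$ (equivalently $|\partial H'|\ge(1-\rho^{1/5})\binom n2$ when counting unordered pairs); (2) $H'$ is $(\rho^{1/5},d)$-cherry-dense.
   Context: A $3$-graph $H$ has edges that are $3$-element subsets of $V(H)$. For a pair $S=\{x,y\}$ of distinct vertices, $\deg_H(S)=\deg_H(xy)$ is the number of edges of $H$ containing $S$. The shadow of $H$ is $\partial H=\{(x,y):\deg_H(xy)>0\}$. For $\vec G_1,\vec G_2\subseteq V(H)\times V(H)$, let $\mathcal P_2(\vec G_1,\vec G_2)=\{(x,y,z)\in V(H)^3:(x,y)\in\vec G_1,(y,z)\in\vec G_2\}$ and $e_H(\vec G_1,\vec G_2)=|\{(x,y,z)\in\mathcal P_2(\vec G_1,\vec G_2):\{x,y,z\}\in E(H)\}|$. An $n$-vertex $3$-graph $H$ is $(\rho,d)$-cherry-dense if $e_H(\vec G_1,\vec G_2)\ge d|\mathcal P_2(\vec G_1,\vec G_2)|-\rho n^3$ for all $\vec G_1,\vec G_2\subseteq V(H)\times V(H)$. A spanning subgraph $H'$ of $H$ has $V(H')=V(H)$ and $E(H')\subseteq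 E(H)$. *)

(* Defs.v *)
From mathcomp Require Import all_boot all_order all_algebra.
Set Implicit Arguments. Unset Strict Implicit. Unset Printing Implicit Defensive.
Import Order.TTheory GRing.Theory Num.Theory.

Definition is_3graph (n : nat) (E : {set {set 'I_n}}) : Prop :=
  forall e, e \in E -> #|e| = 3.

Definition deg (n : nat) (E : {set {set 'I_n}}) (S : {set 'I_n}) : nat :=
  #|[set e in E | S \subset e]|.

Definition P2 (n : nat) (G1 G2 : {set 'I_n * 'I_n}) : {set ('I_n * 'I_n) * 'I_n} :=
  [set t | ((t.1.1, t.1.2) \in G1) && ((t.1.2, t.2) \in G2)].

Definition eH (n : nat) (E : {set {set 'I_n}}) (G1 G2 : {set 'I_n * 'I_n}) : nat :=
  #|[set t in P2 G1 G2 | [set t.1.1; t.1.2; t.2] \in E]|.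

Definition cherry_dense (R : numDomainType) (n : nat) (E : {set {set 'I_n}})
    (rho d : R) : Prop :=
  forall G1 G2 : {set 'I_n * 'I_n},
    (d * (#|P2 G1 G2|)%:R - rho * (n%:R) ^+ 3 <= (eH E G1 G2)%:R)%R.

(* Main.v *)
Require Import Defs.
From mathcomp Require Import all_boot all_order all_algebra.
From mathcomp Require Import ring lra zify.
Set Implicit Arguments. Unset Strict Implicit. Unset Printing Implicit Defensive.
Import Order.TTheory GRing.Theory Num.Theory.

Lemma card_pairs (T1 T2 : finType) (P : pred (T1 * T2)) :
  #|[set u | P u]| = \sum_(a : T1) #|[set b | P (a, b)]|.
Proof.
have -> : #|[set u | P u]| = \sum_(u : T1 * T2) (P u : nat).
  by rewrite -sum1_card big_mkcond /=; apply: eq_bigr => u _; rewrite inE; case: (P u).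
transitivity (\sum_(u : T1 * T2 | xpredT u.1 && xpredT u.2) (P (u.1, u.2) : nat)).
  by apply: eq_big => // -[].
rewrite -(pair_big xpredT xpredT (fun a b => (P (a, b) : nat))) /=.
apply: eq_big => // a _; rewrite -sum1_card [RHS]big_mkcond /=.
by apply: eq_big => // b _; rewrite in_set; case: (P (a, b)).
Qed.

Lemma pair3 (T : finType) (S : {set T}) a b c :
  S \subset [set a; b; c] -> #|S| = 2 ->
  [\/ S = [set a; b], S = [set a; c] | S = [set b; c]].
Proof.
move=> sub /eqP /cards2P [x [y [nxy ES]]].
have hx : x \in [set a; b; c] by apply: (subsetP sub); rewrite ES !inE eqxx.
have hy : y \in [set a; b; c] by apply: (subsetP sub); rewrite ES !inE eqxx orbT.
rewrite ES; move: hx hy nxy; rewrite !inE.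
case/orP => [/orP [/eqP->|/eqP->]|/eqP->]; case/orP => [/orP [/eqP->|/eqP->]|/eqP->]; rewrite ?eqxx // => _.
all: rewrite ?[[set b; a]]setUC ?[[set c; a]]setUC ?[[set c; b]]setUC.
all: try by constructor 1.
all: try by constructor 2.
all: try by constructor 3.
Qed.

Local Open Scope ring_scope.
Lemma ler_root5 (R : rcfType) (a b : R) : 0 <= a -> 0 <= b -> a ^+ 5 <= b ^+ 5 -> a <= b.
Proof. by move=> ha hb; rewrite (@ler_pXn2r R 5) ?nnegrE. Qed.

Lemma cardU_le (T : finType) (A B : {set T}) : (#|A :|: B| <= #|A| + #|B|)%N.
Proof. exact: (leq_card_setU A B).1. Qed.

Lemma set3_card (T : finType) (x y z : T) : x != y -> z \notin [set x; y] ->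
  #|[set x; y; z]| = 3%N.
Proof.
move=> nxy nz; have -> : [set x; y; z] = z |: [set x; y] by rewrite setUC.
by rewrite cardsU1 nz cards2 nxy.
Qed.

Lemma set3_inj (T : finType) (a b c c' : T) : #|[set a; b; c]| = 3%N ->
  [set a; b; c] = [set a; b; c'] -> c = c'.
Proof.
move=> h3 eq; have : c \in [set a; b; c'] by rewrite -eq !inE eqxx orbT.
rewrite !inE => /orP [/orP [/eqP ca|/eqP cb]|/eqP //].
- move: h3; rewrite ca; have -> : [set a; b; a] = [set a; b].
    by apply/setP => w; rewrite !inE; case: (w == a); case: (w == b).
  by rewrite cards2; case: (a != b).
- move: h3; rewrite cb; have -> : [set a; b; b] = [set a; b].
    by apply/setP => w; rewrite !inE; case: (w == a); case: (w == b).
  by rewrite cards2; case: (a != b).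
Qed.

Lemma bin2_ge (n : nat) : (2 <= n)%N -> (n * n <= 4 * 'C(n, 2))%N.
Proof.
elim: n => [|n IH] // h.
case: (ltnP 2 n.+1) => h2.
  have := IH h2; rewrite binS bin1. lia.
have -> : n.+1 = 2%N by lia.
by [].
Qed.

Section Main.
Variables (R : rcfType) (n : nat) (E : {set {set 'I_n}}) (d rho : R).
Hypothesis hE : is_3graph E.
Hypothesis hcd : cherry_dense E rho d.
Hypothesis d0 : 0 < d.
Hypothesis n2 : (2 <= n)%N.

Local Notation m := (n%:R : R).

Definition Bs := [set S : {set 'I_n} | (#|S| == 2)%N && ((deg E S)%:R < 2 / 3 * d * m)].
Definition nbB (x : 'I_n) := [set y | [set x; y] \in Bs].
Definition Bo := [set p : 'I_n * 'I_n | [set p.1; p.2] \in Bs].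
Definition Vb := [set x | d * m / 12 <= (#|nbB x|)%:R].
Definition E' := [set e in E | [disjoint Vb & e] && [forall T in Bs, ~~ (T \subset e)]].

Lemma m_gt0 : 0 < m.
Proof. by rewrite ltr0n; apply: leq_trans n2. Qed.

Lemma Bo_sum : #|Bo| = (\sum_x #|nbB x|)%N.
Proof. by rewrite /Bo card_pairs. Qed.

Lemma Vb_bound : #|Vb|%:R * (d * m / 12) <= #|Bo|%:R.
Proof.
have h1 : \sum_(x in Vb) (d * m / 12) <= \sum_(x in Vb) (#|nbB x|)%:R.
  by apply: ler_sum => x; rewrite inE.
have h2 : \sum_(x in Vb) (#|nbB x|)%:R <= \sum_x (#|nbB x|)%:R :> R.
  rewrite [X in _ <= X](bigID (fun x => x \in Vb)) /= lerDl.
  by apply: sumr_ge0 => x _; rewrite ler0n.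
have -> : #|Vb|%:R * (d * m / 12) = \sum_(x in Vb) (d * m / 12) by rewrite sumr_const mulr_natl.
by rewrite Bo_sum natr_sum; apply: le_trans h2.
Qed.

Lemma P2_setT : P2 Bo setT = setX Bo setT.
Proof. by apply/setP => -[[a b] c]; rewrite !inE. Qed.

Lemma eH_Bo : (eH E Bo setT)%:R <= #|Bo|%:R * (2 / 3 * d * m).
Proof.
have -> : #|Bo|%:R * (2 / 3 * d * m) = \sum_(p in Bo) (2 / 3 * d * m) by rewrite sumr_const mulr_natl.
rewrite /eH card_pairs natr_sum [X in _ <= X]big_mkcond /=.
apply: ler_sum => -[a b] _.
case: ifP => hab.
  apply: (@le_trans _ _ (deg E [set a; b])%:R); last first.
    by move: hab; rewrite !inE /= => /andP [_ /ltW].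
  rewrite ler_nat /deg.
  rewrite -(@card_in_imset _ _ (fun c => [set a; b; c])).
    apply: subset_leq_card; apply/subsetP => e /imsetP [c].
    rewrite !inE /= => /andP [_ hc] ->; rewrite hc /=.
    by apply/subsetP => w; rewrite !inE => /orP [] ->; rewrite ?orbT.
  move=> c c'; rewrite !inE /= => /andP [_ hc] _; apply: set3_inj.
  exact: hE.
rewrite lern0 cards_eq0; apply/eqP/setP => c.
by move: hab; rewrite !inE /= => ->.
Qed.

Lemma Bo_bound : #|Bo|%:R * d * m <= 3 * rho * m ^+ 3.
Proof.
have h := hcd Bo setT.
rewrite P2_setT cardsX cardsT card_ord natrM in h.
have h2 := le_trans h eH_Bo.
lra.
Qed.


Lemma E'_sub : E' \subset E.
Proof. by apply/subsetP => e; rewrite inE => /andP []. Qed.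

Lemma deg0_B (S : {set 'I_n}) : S \in Bs -> deg E' S = 0%N.
Proof.
move=> SB; apply/eqP; rewrite cards_eq0; apply/eqP/setP => e; rewrite !inE.
apply/negbTE; apply/negP => /andP [/andP [_ /andP [_ /forallP /(_ S)]]].
by rewrite SB /= => /negP.
Qed.

Lemma deg0_V (S : {set 'I_n}) v : v \in S -> v \in Vb -> deg E' S = 0%N.
Proof.
move=> vS vV; apply/eqP; rewrite cards_eq0; apply/eqP/setP => e; rewrite !inE.
apply/negbTE; apply/negP => /andP [/andP [_ /andP [dis _]] /subsetP /(_ v vS) ve].
by rewrite (disjointFl dis ve) in vV.
Qed.

Lemma nbB_in x z : (z \in nbB x) = ([set x; z] \in Bs).
Proof. by rewrite /nbB in_set. Qed.

Lemma deg_lb x y : x != y -> [set x; y] \notin Bs -> x \notin Vb -> y \notin Vb ->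
  #|Vb|%:R <= d * m / 6 -> d * m / 3 <= (deg E' [set x; y])%:R.
Proof.
move=> nxy SB xV yV HV.
set S := [set x; y].
have dE : 2 / 3 * d * m <= (deg E S)%:R.
  move: SB; rewrite inE cards2 nxy /= leNgt => ->; done.
set Z := nbB x :|: nbB y :|: Vb.
have sub : [set e in E | S \subset e] \subset
    [set e in E' | S \subset e] :|: (fun z => [set x; y; z]) @: Z.
  apply/subsetP => e; rewrite inE => /andP [eE Se].
  case eE' : (e \in E'); first by rewrite in_setU inE eE' Se.
  rewrite in_setU; apply/orP; right; apply/imsetP.
  have e3 := hE eE.
  have : ~~ (e \subset S).
    apply/negP => /subset_leq_card; rewrite e3 cards2 nxy; done.
  case/subsetPn => z ze zS.
  have sub3 : [set x; y; z] \subset e.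
    apply/subsetP => w; rewrite !inE => /orP [/orP [] |] /eqP -> //;
      by apply: (subsetP Se); rewrite !inE eqxx ?orbT.
  have ee : e = [set x; y; z].
    by apply/eqP; rewrite eq_sym eqEcard sub3 e3 (set3_card nxy zS).
  exists z => //.
  move: eE'; rewrite inE eE /= => /negbT; rewrite negb_and => /orP [].
    rewrite -setI_eq0 => /set0Pn [v]; rewrite inE => /andP [vV]; rewrite ee !in_setU !in_set1.
    case/orP => [/orP [] |] /eqP vE.
    - by rewrite -vE vV in xV.
    - by rewrite -vE vV in yV.
    - by rewrite -vE vV !orbT.
  case/forallPn => T; rewrite negb_imply negbK => /andP [TB Te].
  have T2 : #|T| = 2%N by move: TB; rewrite inE => /andP [/eqP].
  rewrite ee in Te; case: (pair3 Te T2) => ET.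
  - by rewrite -ET TB in SB.
  - by rewrite !in_setU !nbB_in -ET TB.
  - by rewrite !in_setU !nbB_in -ET TB !orbT.
have c1 : (deg E S <= deg E' S + #|Z|)%N.
  apply: (leq_trans (subset_leq_card sub)); apply: (leq_trans (cardU_le _ _)).
  by rewrite leq_add2l leq_imset_card.
have c2 : (#|Z| <= #|nbB x| + #|nbB y| + #|Vb|)%N.
  by rewrite /Z; apply: (leq_trans (cardU_le _ _)); rewrite leq_add2r cardU_le.
have hx : (#|nbB x|)%:R < d * m / 12.
  by move: xV; rewrite inE -ltNge.
have hy : (#|nbB y|)%:R < d * m / 12.
  by move: yV; rewrite inE -ltNge.
have c1r : (deg E S)%:R <= (deg E' S)%:R + (#|Z|)%:R :> R by rewrite -natrD ler_nat.
have c2r : (#|Z|)%:R <= (#|nbB x|)%:R + (#|nbB y|)%:R + (#|Vb|)%:R :> R.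
  by rewrite -!natrD ler_nat.
lra.
Qed.

Lemma Bo_in a b : ((a, b) \in Bo) = ([set a; b] \in Bs).
Proof. by rewrite /Bo in_set. Qed.

Lemma card_XBo (f : ('I_n * 'I_n) * 'I_n -> ('I_n * 'I_n) * 'I_n) :
  (#|f @: setX Bo [set: 'I_n]| <= #|Bo| * n)%N.
Proof. by apply: (leq_trans (leq_imset_card _ _)); rewrite cardsX cardsT card_ord. Qed.

Lemma card_XVb (f : 'I_n * ('I_n * 'I_n) -> ('I_n * 'I_n) * 'I_n) :
  (#|f @: setX Vb [set: 'I_n * 'I_n]| <= #|Vb| * (n * n))%N.
Proof.
by apply: (leq_trans (leq_imset_card _ _)); rewrite cardsX cardsT card_prod card_ord.
Qed.

Lemma loss G1 G2 :
  (eH E G1 G2 <= eH E' G1 G2 + 3 * (#|Bo| * n) + 3 * (#|Vb| * (n * n)))%N.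
Proof.
set I1 := (fun u : ('I_n * 'I_n) * 'I_n => ((u.1.1, u.1.2), u.2)) @: setX Bo [set: 'I_n].
set I2 := (fun u : ('I_n * 'I_n) * 'I_n => ((u.1.1, u.2), u.1.2)) @: setX Bo [set: 'I_n].
set I3 := (fun u : ('I_n * 'I_n) * 'I_n => ((u.2, u.1.1), u.1.2)) @: setX Bo [set: 'I_n].
set J1 := (fun u : 'I_n * ('I_n * 'I_n) => ((u.1, u.2.1), u.2.2)) @: setX Vb [set: 'I_n * 'I_n].
set J2 := (fun u : 'I_n * ('I_n * 'I_n) => ((u.2.1, u.1), u.2.2)) @: setX Vb [set: 'I_n * 'I_n].
set J3 := (fun u : 'I_n * ('I_n * 'I_n) => ((u.2.1, u.2.2), u.1)) @: setX Vb [set: 'I_n * 'I_n].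
have sub : [set t in P2 G1 G2 | [set t.1.1; t.1.2; t.2] \in E] \subset
   [set t in P2 G1 G2 | [set t.1.1; t.1.2; t.2] \in E'] :|:
   ((I1 :|: I2 :|: I3) :|: (J1 :|: J2 :|: J3)).
  apply/subsetP => -[[a b] c]; rewrite inE /= => /andP [tP eE].
  case eE' : ([set a; b; c] \in E'); first by rewrite in_setU inE tP eE'.
  rewrite in_setU; apply/orP; right.
  move: eE'; rewrite inE eE /= => /negbT; rewrite negb_and => /orP [].
    rewrite -setI_eq0 => /set0Pn [v]; rewrite inE => /andP [vV].
    rewrite !in_setU !in_set1; case/orP => [/orP [] |] /eqP vE; apply/orP; right.
    - apply/orP; left; apply/orP; left; apply/imsetP; exists (a, (b, c)) => //.
      by rewrite in_setX /= in_setT andbT -vE.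
    - apply/orP; left; apply/orP; right; apply/imsetP; exists (b, (a, c)) => //.
      by rewrite in_setX /= in_setT andbT -vE.
    - apply/orP; right; apply/imsetP; exists (c, (a, b)) => //.
      by rewrite in_setX /= in_setT andbT -vE.
  case/forallPn => T; rewrite negb_imply negbK => /andP [TB Te].
  have T2 : #|T| = 2%N by move: TB; rewrite inE => /andP [/eqP].
  rewrite !in_setU; apply/orP; left.
  case: (pair3 Te T2) => ET.
  - apply/orP; left; apply/orP; left; apply/imsetP; exists ((a, b), c) => //.
    by rewrite in_setX /= in_setT andbT Bo_in -ET.
  - apply/orP; left; apply/orP; right; apply/imsetP; exists ((a, c), b) => //.
    by rewrite in_setX /= in_setT andbT Bo_in -ET.
  - apply/orP; right; apply/imsetP; exists ((b, c), a) => //.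
    by rewrite in_setX /= in_setT andbT Bo_in -ET.
rewrite /eH; apply: (leq_trans (subset_leq_card sub)).
apply: (leq_trans (cardU_le _ _)); rewrite -addnA leq_add2l.
apply: (leq_trans (cardU_le _ _)); apply: leq_add.
  apply: (leq_trans (cardU_le _ _)); rewrite mulSn mul2n -addnn addnA.
  apply: leq_add; last exact: card_XBo.
  apply: (leq_trans (cardU_le _ _)); apply: leq_add; exact: card_XBo.
apply: (leq_trans (cardU_le _ _)); rewrite mulSn mul2n -addnn addnA.
apply: leq_add; last exact: card_XVb.
apply: (leq_trans (cardU_le _ _)); apply: leq_add; exact: card_XVb.
Qed.

Lemma zero_count : #|Vb|%:R <= d * m / 6 ->
  (#|[set S : {set 'I_n} | (#|S| == 2%N) && (deg E' S == 0%N)]| <= #|Bo| + #|Vb| * n)%N.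
Proof.
move=> HV.
have sub : [set S : {set 'I_n} | (#|S| == 2%N) && (deg E' S == 0%N)] \subset
   (fun p : 'I_n * 'I_n => [set p.1; p.2]) @: (Bo :|: setX Vb [set: 'I_n]).
  apply/subsetP => S; rewrite inE => /andP [/cards2P [x [y [nxy ->]]] /eqP d0S].
  apply/imsetP.
  case SB : ([set x; y] \in Bs).
    by exists (x, y) => //; rewrite in_setU Bo_in SB.
  case xV : (x \in Vb).
    by exists (x, y) => //; rewrite in_setU in_setX /= in_setT xV orbT.
  case yV : (y \in Vb).
    by exists (y, x); rewrite ?in_setU ?in_setX /= ?in_setT ?yV ?orbT // setUC.
  have := deg_lb nxy (negbT SB) (negbT xV) (negbT yV) HV.
  rewrite d0S => h; have := mulr_gt0 d0 m_gt0; lra.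
apply: (leq_trans (subset_leq_card sub)); apply: (leq_trans (leq_imset_card _ _)).
apply: (leq_trans (cardU_le _ _)); rewrite leq_add2l.
by rewrite cardsX cardsT card_ord.
Qed.

Lemma cancel_r (a b c : R) : 0 < c -> a * c <= b * c -> a <= b.
Proof. by move=> c0; rewrite ler_pM2r. Qed.

Lemma main_sec (r : R) : d <= 1 -> 0 <= r -> r * 1000 <= d -> rho = r ^+ 5 ->
    exists E'0 : {set {set 'I_n}},
      E'0 \subset E /\
      (forall S : {set 'I_n}, #|S| = 2%N ->
         d * n%:R / 3 <= (deg E'0 S)%:R \/ deg E'0 S = 0%N) /\
      (#|[set S : {set 'I_n} | (#|S| == 2%N) && (deg E'0 S == 0%N)]|%:R
         <= r * ('C(n, 2))%:R) /\
      cherry_dense E'0 r d.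
Proof.
move=> d1 r0 rd rhoE.
have m0 := m_gt0.
set N : R := (#|Bo|)%:R; set V : R := (#|Vb|)%:R.
have FN : N * d * m <= 3 * rho * m ^+ 3 := Bo_bound.
have FV : V * (d * m / 12) <= N := Vb_bound.
have r1 : r <= 1 by lra.
have hrho : rho * (1000 * 1000) <= r * d ^+ 2.
  have h1 : r ^+ 2 * (1000 * 1000) <= d ^+ 2.
    have : (r * 1000) ^+ 2 <= d ^+ 2.
      by rewrite ler_pXn2r // nnegrE; [nra | lra].
    nra.
  have h2 : r ^+ 4 <= r ^+ 2.
    have : r ^+ 2 <= 1 by rewrite exprn_ile1.
    have : 0 <= r ^+ 2 by rewrite exprn_ge0.
    nra.
  rewrite rhoE.
  have -> : r ^+ 5 = r * r ^+ 4 by rewrite exprS.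
  have : 0 <= r ^+ 4 by rewrite exprn_ge0.
  nra.
have FN1 : N * d <= 3 * rho * m ^+ 2.
  apply: (cancel_r m0); move: FN; rewrite !exprS expr0; lra.
have A1 : N * (1000 * 1000) <= 3 * r * d * m ^+ 2.
  apply: (cancel_r d0).
  have : 0 <= m ^+ 2 by rewrite exprn_ge0 // ltW.
  rewrite expr2 in hrho; rewrite !expr2 in FN1 *.
  nra.
have A2 : V * (1000 * 1000) <= 36 * r * m.
  apply: (cancel_r (mulr_gt0 d0 m0)).
  rewrite expr2 in A1.
  have : 0 <= N by rewrite ler0n.
  nra.
have HV : V <= d * m / 6.
  have : r * m * 1000 <= d * m by nra.
  have := mulr_gt0 d0 m0; lra.
exists E'; split; first exact: E'_sub.
split.
  move=> S /eqP /cards2P [x [y [nxy ->]]].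
  case SB : ([set x; y] \in Bs); first by right; apply: deg0_B.
  case xV : (x \in Vb); first by right; apply: (@deg0_V _ x); rewrite ?xV // !inE eqxx.
  case yV : (y \in Vb); first by right; apply: (@deg0_V _ y); rewrite ?yV // !inE eqxx orbT.
  by left; apply: deg_lb; rewrite ?SB ?xV ?yV.
split.
  have zc := zero_count HV.
  apply: (le_trans (y := N + V * m)).
    by rewrite /N /V -natrM -natrD ler_nat.
  have hC : m ^+ 2 <= 4 * ('C(n, 2))%:R.
    by rewrite -natrX -[4]/(4%:R) -natrM ler_nat expnS expn1; apply: bin2_ge.
  have : V * m * (1000 * 1000) <= 36 * r * m ^+ 2 by rewrite expr2; nra.
  have : N * (1000 * 1000) <= 3 * r * m ^+ 2.
    have : 0 <= r * m ^+ 2 by rewrite mulr_ge0 // exprn_ge0 // ltW.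
    nra.
  have : r * m ^+ 2 <= 4 * (r * ('C(n, 2))%:R) by nra.
  have : 0 <= r * ('C(n, 2))%:R by rewrite mulr_ge0 // ler0n.
  lra.
move=> G1 G2.
have h := hcd G1 G2.
have hl := loss G1 G2.
have hlr : (eH E G1 G2)%:R <= (eH E' G1 G2)%:R + 3 * (N * m) + 3 * (V * (m * m)).
  move: hl; rewrite -(ler_nat R) !natrD !natrM /N /V.
  move=> ?; rewrite /N /V; lra.
have e1 : rho * m ^+ 3 * (1000 * 1000) <= r * m ^+ 3.
  have m3 : 0 <= m ^+ 3 by rewrite exprn_ge0 // ltW.
  have dd : d * d <= 1 by rewrite -expr2 exprn_ile1 // ltW.
  have rm3 : 0 <= r * m ^+ 3 by rewrite mulr_ge0.
  have := ler_wpM2r m3 hrho.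
  have := ler_wpM2l rm3 dd.
  lra.
have e2 : N * m * (1000 * 1000) <= 3 * r * m ^+ 3.
  have : 0 <= r * m ^+ 2 by rewrite mulr_ge0 // exprn_ge0 // ltW.
  rewrite !exprS expr0 in A1 *; nra.
have e3 : V * (m * m) * (1000 * 1000) <= 36 * r * m ^+ 3.
  rewrite !exprS expr0; nra.
have : 0 <= r * m ^+ 3 by rewrite mulr_ge0 // exprn_ge0 // ltW.
lra.
Qed.

End Main.


Theorem lemma2p2 :
  exists n0 : nat,
  forall (R : rcfType) (d rho r : R) (n : nat) (E : {set {set 'I_n}}),
    0 < d -> d <= 1 ->
    0 < rho -> rho <= d ^+ 5 / (3 ^+ 40 * 2 ^+ 5) ->
    0 <= r -> r ^+ 5 = rho ->        (* r = rho^(1/5) *)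
    (n0 <= n)%N ->
    is_3graph E ->
    cherry_dense E rho d ->
    exists E' : {set {set 'I_n}},
      E' \subset E /\
      (forall S : {set 'I_n}, #|S| = 2%N ->
         d * n%:R / 3 <= (deg E' S)%:R \/ deg E' S = 0%N) /\
      (#|[set S : {set 'I_n} | (#|S| == 2%N) && (deg E' S == 0%N)]|%:R
         <= r * ('C(n, 2))%:R) /\
      cherry_dense E' r d.
Proof.
exists 2%N => R d rho r n E d0 d1 rho0 rhoB r0 r5 n2 hE hcd.
have C0 : (0 : R) < 3 ^+ 40 * 2 ^+ 5 by rewrite mulr_gt0 // exprn_gt0.
have hC : rho * (3 ^+ 40 * 2 ^+ 5) <= d ^+ 5 by rewrite -ler_pdivlMr.
have K8 : (3 : R) ^+ 8 = 6561 by rewrite -natrX.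
have rK : r * (3 ^+ 8 * 2) <= d.
  apply: ler_root5; [by rewrite mulr_ge0 // mulr_ge0 // exprn_ge0 | exact: ltW |].
  by rewrite exprMn r5 exprMn -exprM.
have rd : r * 1000 <= d by rewrite K8 in rK; lra.
exact: (main_sec hE hcd d0 n2 d1 r0 rd (esym r5)).
Qed.
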